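(* Let $I$ be a square-free monomial ideal of $S=K[x_1,\ldots,x_n]$ with minimal generating set $G(I)=\bigcup_{i=1}^kG_{d_i}$, where $G_{d_i}$ consists of the generators of degree $d_i$, and for $l\notin\{d_1,\ldots,d_k\}$ put $G_l=\emptyset$. Then $I$ is an $f$-ideal if and only if for each $l\in[n]$, $$|G_l|=\tfrac12\Big(C_n^l-\Big|\bigcup_{d_i>l}\sqcap^{d_i-l}(G_{d_i})\Big|-\Big|\bigcup_{d_i<l}\sqcup^{l-d_i}(G_{d_i})\Big|\Big).$$
   Context: $K$ is a field; $C_n^l$ is the binomial coefficient. For a set $A$ of square-free monomials, $\sqcup(A)=\{gx_i\mid g\in A,\ x_i\nmid g\}$ and $\sqcap(A)=\{h\ne1\mid h=g/x_i \text{ for some } g\in A,\ x_i\mid g\}$; $\sqcup^m,\sqcap^m$ are $m$-fold iterates. With $\sigma$ the bijection $x_{i_1}\cdots x_{i_k}\mapsto\{i_1,\ldots,i_k\}$, the facet complex $\delta_{\mathcal{F}}(I)$ has facets $\sigma(g)$, $g\in G(I)$, the Stanley–Reisner complex is $\delta_{\mathcal{N}}(I)=\{\sigma(g)\mid g\text{ square-free monomial},\ g\notin I\}$, and $I$ is an $f$-ideal if both complexes have the same $f$-vector. *)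

(* Defs.v *)
(* Square-free monomials of K[x_1..x_n] are identified, via the
   bijection sigma, with subsets of 'I_n (variable x_{i+1} <-> index i).
   A square-free monomial ideal I is identified with the set of square-free
   monomials it contains, which is an up-closed family of subsets
   (it determines I, since I is generated by square-free monomials). *)
From mathcomp Require Import all_boot all_order all_algebra.
Set Implicit Arguments. Unset Strict Implicit. Unset Printing Implicit Defensive.

Section SqFree.
Variable n : nat.
Notation mono := {set 'I_n}.

Definition sqfree_ideal (I : {set mono}) : Prop :=
  forall A B : mono, A \in I -> A \subset B -> B \in I.

Definition mingens (I : {set mono}) : {set mono} :=
  [set A in I | [forall B in I, (B \subset A) ==> (B == A)]].

Definition Gdeg (G : {set mono}) (l : nat) : {set mono} :=
  [set g in G | #|g| == l].

Definition sqcup (A : {set mono}) : {set mono} :=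
  [set B : mono | [exists g in A, exists i : 'I_n, (i \notin g) && (B == i |: g)]].

Definition sqcap (A : {set mono}) : {set mono} :=
  [set h : mono | (h != set0) &&
     [exists g in A, exists i : 'I_n, (i \in g) && (h == g :\ i)]].

Definition facet_complex (I : {set mono}) : {set mono} :=
  [set F : mono | [exists g in mingens I, F \subset g]].

Definition SR_complex (I : {set mono}) : {set mono} :=
  [set F : mono | F \notin I].

(* number of faces with l vertices (= f_{l-1}) *)
Definition fnum (C : {set mono}) (l : nat) : nat := #|[set F in C | #|F| == l]|.

(* f-ideal: equal f-vectors (f_0, ..., f_{n-1}), i.e. face counts of sizes 1..n *)
Definition f_ideal (I : {set mono}) : Prop :=
  forall l, 1 <= l <= n -> fnum (facet_complex I) l = fnum (SR_complex I) l.

End SqFree.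

(* Main.v *)
Require Import Defs.
From mathcomp Require Import all_boot all_order all_algebra.
From mathcomp Require Import zify.
Set Implicit Arguments. Unset Strict Implicit. Unset Printing Implicit Defensive.

Section S.
Variable n : nat.
Implicit Types (A B g : {set 'I_n}) (X : {set {set 'I_n}}).

Definition hom X d := forall g, g \in X -> #|g| = d.

Lemma iter_sqcupP X d k : hom X d -> forall B,
  (B \in iter k (@sqcup n) X) = (#|B| == d + k) && [exists g in X, g \subset B].
Proof.
move=> hX; elim: k => [|k IH] B /=.
- rewrite addn0; apply/idP/andP => [BX|[/eqP hB /exists_inP[g gX gB]]].
  + by rewrite hX // eqxx; split=> //; apply/exists_inP; exists B.
  + suff -> : B = g by [].
    apply/eqP; rewrite eq_sym eqEcard gB hB (hX _ gX) leqnn //.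
- rewrite inE; apply/existsP/andP => [[g' /andP[g'X /existsP[i /andP[ig' /eqP->]]]]|[/eqP hB /exists_inP[g gX gB]]].
  + move: g'X; rewrite IH => /andP[/eqP hg' /exists_inP[g gX gg']].
    split; first by rewrite cardsU1 ig' hg' addnS.
    apply/exists_inP; exists g => //; exact: subset_trans gg' (subsetUr _ _).
  + have lt: #|g| < #|B| by rewrite hB (hX _ gX) addnS ltnS leq_addr.
    have /properP[_ [i iB igN]] : g \proper B by rewrite properEcard gB lt.
    exists (B :\ i); rewrite IH; apply/andP; split.
    * apply/andP; split.
        have h := cardsD1 i B; rewrite iB add1n hB addnS in h; apply/eqP; by case: h.
      apply/exists_inP; exists g => //.
      apply/subsetP=> x xg; rewrite !inE (subsetP gB _ xg) andbT.
      by apply/eqP => xi; rewrite -xi xg in igN.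
    * by apply/existsP; exists i; rewrite setD11 setD1K // eqxx.
Qed.

Lemma iter_sqcapP X d k : hom X d -> k < d -> forall B,
  (B \in iter k (@sqcap n) X) = (#|B| + k == d) && [exists g in X, B \subset g].
Proof.
move=> hX; elim: k => [|k IH] lt B /=.
- rewrite addn0; apply/idP/andP => [BX|[/eqP hB /exists_inP[g gX gB]]].
  + by rewrite hX // eqxx; split=> //; apply/exists_inP; exists B.
  + suff -> : B = g by [].
    apply/eqP; rewrite eqEcard gB hB (hX _ gX) leqnn //.
- rewrite inE; apply/andP/andP => [[_ /existsP[g' /andP[g'X /existsP[i /andP[ig' /eqP->]]]]]|[/eqP hB /exists_inP[g gX Bg]]].
  + move: g'X; rewrite IH ?(ltnW lt) // => /andP[/eqP hg' /exists_inP[g gX gg']].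
    split. have h := cardsD1 i g'; rewrite ig' add1n in h; apply/eqP; by rewrite -addSnnS -h.
    apply/exists_inP; exists g => //; exact: subset_trans (subsetDl _ _) gg'.
  + split.
      by apply/eqP => B0; rewrite B0 cards0 in hB; lia.
    have lt2: #|B| < #|g| by rewrite (hX _ gX) -hB addnS ltnS leq_addr.
    have /properP[_ [i ig iBN]] : B \proper g by rewrite properEcard Bg lt2.
    apply/existsP; exists (i |: B); rewrite IH ?(ltnW lt) //; apply/andP; split.
    * apply/andP; split.
        rewrite cardsU1 iBN add1n; by rewrite addSnnS hB.
      apply/exists_inP; exists g => //.
      by rewrite subUset sub1set ig Bg.
    * by apply/existsP; exists i; rewrite setU1K // setU11 eqxx.
Qed.


Lemma homG X d : hom (Gdeg X d) d.
Proof. by move=> g; rewrite inE => /andP[_ /eqP]. Qed.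

Lemma inGdeg X l B : (B \in Gdeg X l) = (B \in X) && (#|B| == l).
Proof. by rewrite inE. Qed.

Lemma card_lt_n B : #|B| < n.+1.
Proof. by rewrite ltnS; apply: leq_trans (max_card (mem B)) _; rewrite card_ord. Qed.

Lemma inSep (C : {set {set 'I_n}}) l B :
  (B \in [set F in C | #|F| == l]) = (B \in C) && (#|B| == l).
Proof. by rewrite inE. Qed.

Variable I : {set {set 'I_n}}.

Lemma inFC B : (B \in facet_complex I) = [exists g in mingens I, B \subset g].
Proof. by rewrite inE. Qed.

Hypothesis hI : sqfree_ideal I.

Lemma memG g : g \in mingens I -> g \in I /\ forall B, B \in I -> B \subset g -> B = g.
Proof.
rewrite inE => /andP[gI /forall_inP h]; split=> // B BI Bg; apply/eqP.
exact: (implyP (h B BI) Bg).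
Qed.

Lemma exG B : B \in I -> exists2 g, g \in mingens I & g \subset B.
Proof.
move=> BI; have [A /minsetP[AI Amin] AB] := minset_exists (P := fun A => A \in I) BI.
exists A => //; rewrite inE AI; apply/forall_inP => C CI; apply/implyP => CA.
by rewrite (Amin C CI CA).
Qed.

Lemma capU l B : 0 < l ->
  (B \in \bigcup_(d < n.+1 | (l < d)%N) iter (d - l) (@sqcap n) (Gdeg (mingens I) d))
  = (#|B| == l) && [exists g in mingens I, B \proper g].
Proof.
move=> l0; apply/bigcupP/andP => [[d ld]|[/eqP hB /exists_inP[g gG]]].
- have kd : d - l < d by rewrite ltn_subrL l0 (leq_trans l0 (ltnW ld)).
  rewrite (iter_sqcapP (@homG _ _) kd).
  move=> /andP[/eqP h /exists_inP[g]]; rewrite inGdeg => /andP[gG /eqP gd] Bg.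
  have hB : #|B| = l by move: h; move: #|B| => b; lia.
  split; first by rewrite hB.
  apply/exists_inP; exists g => //; by rewrite properEcard Bg gd hB.
- rewrite properEcard => /andP[Bg lt].
  exists (Ordinal (card_lt_n g)) => /=; first by rewrite -hB.
  have kd : #|g| - l < #|g| by rewrite ltn_subrL l0 (leq_ltn_trans _ lt).
  rewrite (iter_sqcapP (@homG _ _) kd).
  apply/andP; split; first by rewrite -hB subnKC // ltnW.
  by apply/exists_inP; exists g => //; rewrite inGdeg gG eqxx.
Qed.

Lemma cupU l B :
  (B \in \bigcup_(d < n.+1 | (d < l)%N) iter (l - d) (@sqcup n) (Gdeg (mingens I) d))
  = (#|B| == l) && [exists g in mingens I, g \proper B].
Proof.
apply/bigcupP/andP => [[d dl]|[/eqP hB /exists_inP[g gG]]].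
- rewrite (iter_sqcupP _ (@homG _ _)).
  move=> /andP[/eqP h /exists_inP[g]]; rewrite inGdeg => /andP[gG /eqP gd] gB.
  have hB : #|B| = l by rewrite h subnKC // ltnW.
  split; first by rewrite hB.
  apply/exists_inP; exists g => //; by rewrite properEcard gB gd hB.
- rewrite properEcard => /andP[gB lt].
  exists (Ordinal (card_lt_n g)) => /=; first by rewrite -hB.
  rewrite (iter_sqcupP _ (@homG _ _)).
  apply/andP; split; first by rewrite -hB subnKC // ltnW.
  by apply/exists_inP; exists g => //; rewrite inGdeg gG eqxx.
Qed.

Lemma countF l : 0 < l ->
  fnum (facet_complex I) l = #|Gdeg (mingens I) l| +
  #|\bigcup_(d < n.+1 | (l < d)%N) iter (d - l) (@sqcap n) (Gdeg (mingens I) d)|.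
Proof.
move=> l0; set P := \bigcup_(d < n.+1 | _) _.
have E : [set F in facet_complex I | #|F| == l] = Gdeg (mingens I) l :|: P.
  apply/setP => B; rewrite in_setU inGdeg capU // inSep inFC.
  apply/idP/idP => [/andP[/exists_inP[g gG Bg] /eqP hB]|].
    have [e|ne] := eqVneq B g; first by subst g; rewrite gG hB eqxx.
    apply/orP; right; rewrite hB eqxx /=; apply/exists_inP; exists g => //.
    by rewrite properEneq ne.
  case/orP => [/andP[BG ->]|/andP[-> /exists_inP[g gG Bg]]]; rewrite andbT.
    by apply/exists_inP; exists B.
  by apply/exists_inP; exists g => //; apply: proper_sub.
have D : Gdeg (mingens I) l :&: P = set0.
  apply/setP => B; rewrite in_setI inGdeg capU // in_set0.
  apply/negP => /andP[/andP[BG _] /andP[_ /exists_inP[g gG Bg]]].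
  have [BI _] := memG BG; have [_ gmin] := memG gG.
  by move: (Bg); rewrite (gmin B BI (proper_sub Bg)) properxx.
by rewrite /fnum E cardsU D cards0 subn0.
Qed.

Lemma countN l :
  fnum (SR_complex I) l + #|Gdeg (mingens I) l| +
  #|\bigcup_(d < n.+1 | (d < l)%N) iter (l - d) (@sqcup n) (Gdeg (mingens I) d)| = 'C(n, l).
Proof.
set U := \bigcup_(d < n.+1 | _) _.
set L := [set B : {set 'I_n} | #|B| == l].
have cL : #|L| = 'C(n, l) by rewrite card_draws card_ord.
have E1 : L :\: I = [set F in SR_complex I | #|F| == l].
  by apply/setP => B; rewrite !inE andbC.
have E2 : L :&: I = Gdeg (mingens I) l :|: U.
  apply/setP => B; rewrite in_setU inGdeg cupU in_setI [B \in L]inE.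
  apply/idP/idP => [/andP[/eqP hB BI]|].
    have [g gG gB] := exG BI.
    have [e|ne] := eqVneq g B; first by rewrite -e gG -hB e eqxx.
    apply/orP; right; rewrite hB eqxx /=; apply/exists_inP; exists g => //.
    by rewrite properEneq ne.
  case/orP => [/andP[BG ->]|/andP[-> /exists_inP[g gG gB]]] /=.
    by have [] := memG BG.
  have [gI _] := memG gG; exact: hI gI (proper_sub gB).
have D : Gdeg (mingens I) l :&: U = set0.
  apply/setP => B; rewrite in_setI inGdeg cupU in_set0.
  apply/negP => /andP[/andP[BG _] /andP[_ /exists_inP[g gG gB]]].
  have [gI _] := memG gG; have [_ Bmin] := memG BG.
  by move: (gB); rewrite (Bmin g gI (proper_sub gB)) properxx.
rewrite -cL -(cardsID I L) E1 E2 cardsU D cards0 subn0 /fnum.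
by rewrite [RHS]addnC addnA.
Qed.

End S.

Lemma arith (f N g p u c : nat) : f = g + p -> N + g + u = c ->
  (f = N <-> (g%:Z * 2 = c%:Z - p%:Z - u%:Z)%R).
Proof. move=> -> <-; split; lia. Qed.

Theorem theorem6p3 (n : nat) (I : {set {set 'I_n}}) :
  sqfree_ideal I ->
  (f_ideal I <->
   forall l : nat, 1 <= l <= n ->
     ((#|Gdeg (mingens I) l|%:Z * 2)%R =
      'C(n, l)%:Z
      - #|\bigcup_(d < n.+1 | (l < d)%N) iter (d - l) (@sqcap n) (Gdeg (mingens I) d)|%:Z
      - #|\bigcup_(d < n.+1 | (d < l)%N) iter (l - d) (@sqcup n) (Gdeg (mingens I) d)|%:Z)%R).
Proof.
move=> hI; split => [hf l hl | h l hl].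
- have l0 : 0 < l by case/andP: hl.
  apply: (arith (countF I l0) (countN hI l)).1; exact: hf.
- have l0 : 0 < l by case/andP: hl.
  apply/(arith (countF I l0) (countN hI l)).2; exact: h.
Qed.
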